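(* Let $X$ be the compact symplectic toric manifold determined by a moment polytope $P=\bigcap_{j=1}^m\{\mathbf{u}\in\mathbb{R}^n : \ell_j(\mathbf{u})\ge 0\}\subset\mathbb{R}^n$, where $\ell_j(\mathbf{u})=\langle \mathbf{u},\mathbf{v}_j\rangle-\lambda_j$. For a point $\mathbf{u}$ in the interior of $P$, the following are equivalent: (1) The toric fiber $L(\mathbf{u})$ is strongly bulk-balanced. (2) $\mathbf{u}\in\mathrm{Trop}(P,\mathbf{m})$ for every lattice point $\mathbf{m}\in\mathbb{Z}^n$. (3) $\mathbf{u}\in\mathrm{Trop}(P,\mathbf{m})$ for every primitive lattice point $\mathbf{m}\in\mathbb{Z}^n$ that is orthogonal to some $(n-1)$-dimensional subspace of $\mathbb{R}^n$ spanned by facet normal vectors $\mathbf{v}_j$ of $P$.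
   Context: The moment polytope is written uniquely as $P=\bigcap_{j=1}^m\{\mathbf{u}: \langle\mathbf{u},\mathbf{v}_j\rangle\ge\lambda_j\}$ with $\mathbf{v}_j\in\mathbb{Z}^n$ primitive inward normals and the intersection non-redundant (each half-space bounds a distinct facet); $\ell_j(\mathbf{u}):=\langle\mathbf{u},\mathbf{v}_j\rangle-\lambda_j$. $L(\mathbf{u})$ denotes the Lagrangian torus fiber of the moment map over $\mathbf{u}$. Tropicalization relative to $\mathbf{m}\in\mathbb{Z}^n$: $\mathrm{Trop}(P,\mathbf{m})$ is the non-differentiable locus of the piecewise-linear function $\mathbf{u}\mapsto\min\{\ell_j(\mathbf{u}) : \langle\mathbf{m},\mathbf{v}_j\rangle\neq0\}$; equivalently the set of $\mathbf{u}$ at which this minimum is attained by at least two distinct indices $j_1\ne j_2$ with $\langle \mathbf{m},\mathbf{v}_{j_1}\rangle\neq 0\neq\langle \mathbf{m},\mathbf{v}_{j_2}\rangle$. By convention $\mathrm{Trop}(P,\mathbf{0})=\mathbb{R}^n$. Strongly bulk-balanced: for $\mathbf{u}\in\mathrm{Int}(P)$ let $S_1<S_2<\cdots$ be the distinct values among $\ell_1(\mathbf{u}),\dots,\ell_m(\mathbf{u})$ and $I_l=\{j:\ell_j(\mathbf{u})=S_l\}$. Let $A_l^\perp=\mathrm{span}_\mathbb{R}\{\mathbf{v}_j : j\in I_1\cup\dots\cup I_l\}$ ($A_0^\perp=0$), $d_l=\dim A_l^\perp-\dim A_{l-1}^\perp$, and $\kappa$ the smallest $l$ with $A_l^\perp=\mathbb{R}^n$.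 Choose vectors $e^*_{r,s}\in\mathbb{Q}^n$ ($1\le r\le\kappa$, $1\le s\le d_r$) such that for each $l$, $\{e^*_{r,s}: r\le l\}$ is a $\mathbb{Q}$-basis of $A_l^\perp\cap\mathbb{Q}^n$, and every $\mathbf{v}_j$ lies in $\bigoplus_{r,s}\mathbb{Z}e^*_{r,s}$. Write $\mathbf{v}_j=\sum_{r,s}v_j^{r,s}e^*_{r,s}$ and $\mathbf{y}^{\mathbf{v}_j}=\prod_{r,s}y_{r,s}^{v_j^{r,s}}$ in variables $y_{r,s}$. For $c=(c_1,\dots,c_m)\in(\mathbb{C}^* )^m$ and $1\le l\le\kappa$ put $F^c_l(\mathbf{y})=\sum_{j\in I_l}c_j\,\mathbf{y}^{\mathbf{v}_j}$. The generalized leading term equation (for $c$) is the system $y_{l,s}\,\partial F^c_l/\partial y_{l,s}=0$ for all $1\le l\le\kappa$, $1\le s\le d_l$. The fiber $L(\mathbf{u})$ is strongly bulk-balanced if for some $c\in(\mathbb{C}^* )^m$ this system has a solution $(y_{r,s})\in(\mathbb{C}^* )^n$ (whether such a solution exists does not depend on the choice of the vectors $e^*_{r,s}$). *)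

(* Defs.v *)
From HB Require Import structures.
From mathcomp Require Import all_boot all_order all_algebra.
From mathcomp Require Import reals.
From mathcomp Require Import complex.
Set Implicit Arguments. Unset Strict Implicit. Unset Printing Implicit Defensive.
Import Order.TTheory GRing.Theory Num.Theory.
Local Open Scope ring_scope.

Section Defs.
Variables (R : realType) (n m : nat).
Variables (v : 'I_m -> 'I_n -> int) (lam : 'I_m -> R).

Definition pairZ (u : 'I_n -> R) (w : 'I_n -> int) : R := \sum_(i < n) u i * (w i)%:~R.
Definition dotZ (a w : 'I_n -> int) : int := \sum_(i < n) a i * w i.

Definition ell (j : 'I_m) (u : 'I_n -> R) : R := pairZ u (v j) - lam j.

Definition inP (u : 'I_n -> R) : Prop := forall j, 0 <= ell j u.
(* interior of P (P is n-dimensional and the description is non-redundant) *)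
Definition inIntP (u : 'I_n -> R) : Prop := forall j, 0 < ell j u.

(* primitive integer vector: the only natural number dividing all entries is 1
   (in particular the vector is nonzero) *)
Definition primitiveZ (w : 'I_n -> int) : Prop :=
  forall d : nat, (forall i, (d%:Z %| w i)%Z) -> d = 1%N.

Definition vR (j : 'I_m) : 'rV[R]_n := \row_(i < n) (v j i)%:~R.

(* real matrix whose rows are the v_j with j satisfying the predicate (other rows 0);
   its row space is span_R {v_j : S j} *)
Definition spanR (S : pred 'I_m) : 'M[R]_(m, n) :=
  \matrix_(j < m, i < n) (if S j then (v j i)%:~R else 0).

Definition normals_primitive : Prop := forall j, primitiveZ (v j).

Definition non_redundant : Prop :=
  forall j, exists u : 'I_n -> R, ell j u = 0 /\ forall i, i != j -> 0 < ell i u.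

Definition P_bounded : Prop :=
  exists B : R, forall u, inP u -> forall i, `|u i| <= B.

(* Delzant: at each vertex (point of P where the active normals span R^n),
   exactly n facets meet and their normals form a Z-basis of Z^n *)
Definition delzant : Prop :=
  forall u, inP u ->
    \rank (spanR (fun j => ell j u == 0)) = n ->
    exists f : 'I_n -> 'I_m,
      injective f /\ (forall j, ell j u = 0 <-> exists k, f k = j) /\
      `|\det (\matrix_(k < n, i < n) v (f k) i)| = 1.

Definition toric_polytope : Prop :=
  [/\ normals_primitive, non_redundant, P_bounded & delzant].

(* u in Trop(P, mm): the minimum of ell_j(u) over {j | <mm, v_j> <> 0} is attained by
   two distinct indices; Trop(P, 0) = R^n by convention *)
Definition in_trop (mm : 'I_n -> int) (u : 'I_n -> R) : Prop :=
  (forall i, mm i = 0) \/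
  exists j1 j2 : 'I_m,
    [/\ j1 != j2, dotZ mm (v j1) != 0, dotZ mm (v j2) != 0,
        ell j1 u = ell j2 u &
        forall j, dotZ mm (v j) != 0 -> ell j1 u <= ell j u].

(* Levels: the distinct values t among ell_j(u); I_t = {j | ell_j(u) = t};
   A_t^perp = span_R {v_j | ell_j(u) <= t}, A_{t-}^perp = span_R {v_j | ell_j(u) < t}. *)
Definition isLevel (u : 'I_n -> R) (t : R) : bool := [exists j, ell j u == t].
Definition dimA (u : 'I_n -> R) (t : R) : nat := \rank (spanR (fun j => ell j u <= t)).
Definition dimAprev (u : 'I_n -> R) (t : R) : nat := \rank (spanR (fun j => ell j u < t)).

Definition monoZ (y : 'I_n -> R[i]) (a : 'I_n -> int) : R[i] := \prod_(k < n) y k ^ a k.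

(* The rows e*_k (k : 'I_n) of the rational matrix E are the vectors e*_{r,s},
   ordered by level: e*_{r,s} with r <= l are exactly the rows k < dim A_l^perp.
   The variable y_{r,s} is y_k, and v_j = sum_k a j k * e*_k. *)
Definition adapted_basis (u : 'I_n -> R) (E : 'M[rat]_n) : Prop :=
  forall t, isLevel u t ->
    (* {e*_k | k < dim A_t^perp} is a Q-basis of A_t^perp \cap Q^n *)
    (forall q : 'rV[rat]_n,
        (map_mx ratr q <= spanR (fun j => (ell j u <= t)%R))%MS <->
        exists b : 'I_n -> rat, (forall k : 'I_n, (dimA u t <= k)%N -> b k = 0) /\
                                q = \sum_(k < n) b k *: row k E) /\
    (forall b : 'I_n -> rat, (forall k : 'I_n, (dimA u t <= k)%N -> b k = 0) ->
        \sum_(k < n) b k *: row k E = 0 -> forall k, b k = 0).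

Definition coords (E : 'M[rat]_n) (a : 'I_m -> 'I_n -> int) : Prop :=
  forall j, \row_(i < n) ((v j i)%:~R : rat) = \sum_(k < n) (a j k)%:~R *: row k E.

(* generalized leading term equation  y_{l,s} dF_l/dy_{l,s} = 0, where for the
   Laurent monomial y^{a_j}, y_k d/dy_k (y^{a_j}) = a_{j,k} y^{a_j}. *)
Definition leading_term_eq (u : 'I_n -> R) (a : 'I_m -> 'I_n -> int)
    (c : 'I_m -> R[i]) (y : 'I_n -> R[i]) : Prop :=
  forall t, isLevel u t -> forall k : 'I_n, (dimAprev u t <= k < dimA u t)%N ->
    \sum_(j < m | ell j u == t) c j * (a j k)%:~R * monoZ y (a j) = 0.

Definition strongly_bulk_balanced (u : 'I_n -> R) : Prop :=
  exists (E : 'M[rat]_n) (a : 'I_m -> 'I_n -> int),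
    adapted_basis u E /\ coords E a /\
    exists (c : 'I_m -> R[i]) (y : 'I_n -> R[i]),
      (forall j, c j != 0) /\ (forall k, y k != 0) /\ leading_term_eq u a c y.

End Defs.

(* Main.v *)
Require Import Defs.
From Stdlib Require Import Classical FunctionalExtensionality.
From HB Require Import structures.
From mathcomp Require Import all_boot all_order all_algebra.
From mathcomp Require Import reals.
From mathcomp Require Import complex.
From mathcomp Require Import ring.
Import Order.TTheory GRing.Theory Num.Theory.
Local Open Scope ring_scope.
Set Implicit Arguments. Unset Strict Implicit. Unset Printing Implicit Defensive.

Section Basics.
Variables (R : realType) (n m : nat) (v : 'I_m -> 'I_n -> int).
Local Notation spanR := (spanR R v).
Local Notation vR := (vR R v).

Lemma spanR_row (S : pred 'I_m) j : row j (spanR S) = if S j then vR j else 0.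
Proof.
apply/rowP => i; rewrite !mxE; case: (S j); by rewrite ?mxE.
Qed.

Lemma sub_spanR (S : pred 'I_m) j : S j -> (vR j <= spanR S)%MS.
Proof. by move=> Sj; have := row_sub j (spanR S); rewrite spanR_row Sj. Qed.

Lemma spanR_subP (S : pred 'I_m) p (A : 'M[R]_(p, n)) :
  (forall j, S j -> (vR j <= A)%MS) -> (spanR S <= A)%MS.
Proof.
move=> H; apply/row_subP => j; rewrite spanR_row.
by case Sj: (S j); [apply: H | rewrite sub0mx].
Qed.

Lemma spanR_sub (S T : pred 'I_m) : (forall j, S j -> T j) -> (spanR S <= spanR T)%MS.
Proof. by move=> H; apply: spanR_subP => j /H; apply: sub_spanR. Qed.

Lemma spanR_ext (S T : pred 'I_m) : S =1 T -> spanR S = spanR T.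
Proof. by move=> H; apply/matrixP => j i; rewrite !mxE H. Qed.

Lemma spanR_decomp (S : pred 'I_m) p (w : 'M[R]_(p, n)) : (w <= spanR S)%MS ->
  exists D : 'M[R]_(p, m), w = D *m spanR S.
Proof. by move/submxP. Qed.

Lemma spanR_sub_row (S : pred 'I_m) (w : 'rV[R]_n) : (w <= spanR S)%MS ->
  exists D : 'I_m -> R, w = \sum_(j < m | S j) D j *: vR j.
Proof.
case/submxP => D ->; exists (fun j => D 0 j).
rewrite mulmx_sum_row (bigID S) /= [X in _ + X]big1 ?addr0.
  by apply: eq_bigr => j Sj; rewrite spanR_row Sj.
by move=> j /negbTE Sj; rewrite spanR_row Sj scaler0.
Qed.

Lemma spanR_mul0 (S : pred 'I_m) p (w : 'M[R]_(n, p)) :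
  (forall j, S j -> vR j *m w = 0) -> spanR S *m w = 0.
Proof.
move=> H; apply/row_matrixP => j; rewrite row_mul row0 spanR_row.
by case Sj: (S j); [apply: H | rewrite mul0mx].
Qed.

Lemma sub_mul0 (S : pred 'I_m) p q (w : 'M[R]_(n, p)) (x : 'M[R]_(q, n)) :
  (forall j, S j -> vR j *m w = 0) -> (x <= spanR S)%MS -> x *m w = 0.
Proof.
move=> H /submxP [D ->]; by rewrite -mulmxA spanR_mul0 // mulmx0.
Qed.

End Basics.

Section FullRank.
Variables (R : realType) (n m : nat) (v : 'I_m -> 'I_n -> int) (lam : 'I_m -> R).
Local Notation spanR := (spanR R v).
Local Notation vR := (vR R v).

Lemma pairZ_lin (x y : 'I_n -> R) (s : R) w :
  pairZ (fun k => x k + s * y k) w = pairZ x w + s * pairZ y w.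
Proof.
rewrite /pairZ mulr_sumr -big_split /=; apply: eq_bigr => k _.
by rewrite mulrDl mulrA.
Qed.

Lemma full_rank (u : 'I_n -> R) : P_bounded v lam -> inIntP v lam u ->
  \rank (spanR predT) = n.
Proof.
move=> [B HB] hu; apply/eqP; rewrite eqn_leq rank_leq_col /=; apply/negP => /negP.
rewrite -ltnNge => hlt.
set A := spanR predT.
have : kermx A^T != 0.
  by rewrite -mxrank_eq0 mxrank_ker mxrank_tr subn_eq0 -ltnNge.
case/rowV0Pn => d /sub_kermxP dA dn0.
have hd : forall j, pairZ (fun k => d 0 k) (v j) = 0.
  move=> j; have := congr1 (fun M : 'rV[R]_m => M 0 j) dA; rewrite !mxE => <-.
  by apply: eq_bigr => k _; rewrite !mxE.
have [i di] : exists i, d 0 i != 0.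
  apply/existsP; apply: contraR dn0 => /existsPn H.
  by apply/eqP/rowP => k; rewrite mxE; apply/eqP/negPn/H.
pose s := (B - u i + 1) / d 0 i.
pose u' := fun k => u k + s * d 0 k.
have inu' : inP v lam u'.
  move=> j; rewrite /ell pairZ_lin hd mulr0 addr0; exact: ltW (hu j).
have := HB u' inu' i; rewrite /u' /s divfK //.
have -> : u i + (B - u i + 1) = B + 1 by ring.
move=> h; have := le_trans (ler_norm _) h => h2.
by move: h2; rewrite -{2}[B]addr0 lerD2l ler10.
Qed.

End FullRank.

Section Adapted.
Variables (R : realType) (n m : nat) (v : 'I_m -> 'I_n -> int) (lam : 'I_m -> R).
Variable (u : 'I_n -> R).
Local Notation spanR := (spanR R v).
Local Notation vR := (vR R v).
Local Notation ell j := (ell v lam j u).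

Lemma prev_level (t : R) : (forall j, ~~ (ell j < t)) \/
  exists t', isLevel v lam u t' /\ (forall j, (ell j < t) = (ell j <= t')).
Proof.
case: (pickP (fun j => ell j < t)) => [j0 hj0|H]; last by left => j; rewrite H.
right; case: (@arg_maxP _ _ _ j0 (fun j => ell j < t) (fun j => ell j) hj0) => jm hjm Hmax.
exists (ell jm); split; first by apply/existsP; exists jm.
move=> j; apply/idP/idP => [hj|hj]; first exact: Hmax.
exact: le_lt_trans hj hjm.
Qed.

Lemma spanR0 : spanR pred0 = 0.
Proof. by apply/matrixP => i j; rewrite !mxE. Qed.

Lemma vR_ratr (j : 'I_m) : map_mx ratr (\row_(i < n) ((v j i)%:~R : rat)) = vR j.
Proof. by apply/rowP => i; rewrite !mxE ratr_int. Qed.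

Variables (E : 'M[rat]_n) (a : 'I_m -> 'I_n -> int).
Hypothesis (hE : adapted_basis v lam u E) (ha : coords v E a).
Hypothesis full : \rank (spanR predT) = n.

Lemma sum_rowE (b : 'I_n -> rat) : \sum_(k < n) b k *: row k E = (\row_k b k) *m E.
Proof. by rewrite mulmx_sum_row; apply: eq_bigr => k _; rewrite mxE. Qed.

Lemma unitEad : E \in unitmx.
Proof.
case: (posnP m) => [m0|mpos].
  move: full; rewrite -[spanR _]trmxK mxrank_tr.
  have -> : (spanR predT)^T = 0 by apply/matrixP => i [j hj]; exfalso; move: hj; by rewrite m0.
  rewrite mxrank0 => n0; rewrite unitmxE; move: E; rewrite -n0 => E'.
  by rewrite det_mx00 unitr1.
pose j0 : 'I_m := Ordinal mpos.
case: (@arg_maxP _ _ _ j0 xpredT (fun j => ell j) isT) => jm _ Hmax.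
have lev : isLevel v lam u (ell jm) by apply/existsP; exists jm.
have dA : dimA v lam u (ell jm) = n.
  by rewrite /dimA (@spanR_ext _ _ _ _ _ predT) // => j; have := Hmax j isT => /= ->.
have [_ ind] := hE lev.
rewrite -row_free_unit; apply: inj_row_free => w hw.
have := ind (fun k => w 0 k); rewrite dA => H.
apply/rowP => k; rewrite mxE; apply: H => // [k' hk|]; first by move: (ltn_ord k'); rewrite ltnNge hk.
by rewrite sum_rowE -hw; congr (_ *m _); apply/rowP => i; rewrite mxE.
Qed.

Lemma coordsM j : \row_(i < n) ((v j i)%:~R : rat) = (\row_k ((a j k)%:~R : rat)) *m E.
Proof. by rewrite ha sum_rowE. Qed.

Lemma coord_zero t j (k : 'I_n) : isLevel v lam u t -> ell j <= t -> (dimA v lam u t <= k)%N -> a j k = 0.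
Proof.
move=> lev hj hk; have [sp _] := hE lev.
have := (sp (\row_(i < n) ((v j i)%:~R : rat))).1.
rewrite vR_ratr => /(_ (@sub_spanR _ _ _ v _ _ hj)) [b [hb hq]].
move: hq; rewrite sum_rowE coordsM => /(row_free_inj _).
rewrite row_free_unit unitEad => /(_ isT) /rowP /(_ k); rewrite !mxE hb //.
by move/eqP; rewrite intr_eq0 => /eqP.
Qed.

Lemma coord_zero_prev t j (k : 'I_n) : isLevel v lam u t -> ell j < t ->
  (dimAprev v lam u t <= k)%N -> a j k = 0.
Proof.
move=> lev hj; case: (prev_level t) => [H|[t' [lev' Ht']]]; first by move: (H j); rewrite hj.
rewrite /dimAprev (@spanR_ext R n m v (fun j => ell j < t) (fun j => ell j <= t')) //.
by move=> hk; apply: (coord_zero lev' _ hk); rewrite -Ht'.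
Qed.

Lemma rowE_level t (k : 'I_n) : isLevel v lam u t -> (k < dimA v lam u t)%N ->
  (map_mx ratr (row k E) <= spanR (fun j => (ell j <= t)%R))%MS.
Proof.
move=> lev hk; have [sp _] := hE lev; apply/(sp _).2.
exists (fun k' => (k' == k)%:R); split.
  by move=> k' hk'; case: eqP => // ek; move: hk; rewrite -ek ltnNge hk'.
rewrite (bigD1 k) //= eqxx scale1r big1 ?addr0 // => k' /negbTE ->.
by rewrite scale0r.
Qed.

Lemma rowE_prev t (k : 'I_n) : isLevel v lam u t -> (k < dimAprev v lam u t)%N ->
  (map_mx ratr (row k E) <= spanR (fun j => (ell j < t)%R))%MS.
Proof.
move=> lev; case: (prev_level t) => [H|[t' [lev' Ht']]].
  rewrite /dimAprev (@spanR_ext R n m v _ pred0) ?spanR0 ?mxrank0 // => j.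
  by apply/negbTE/H.
rewrite /dimAprev (@spanR_ext R n m v (fun j => ell j < t) (fun j => ell j <= t')) //.
by move=> hk; apply: rowE_level.
Qed.

End Adapted.

Section Dir12.
Variables (R : realType) (n m : nat) (v : 'I_m -> 'I_n -> int) (lam : 'I_m -> R).
Variable (u : 'I_n -> R).
Local Notation spanR := (spanR R v).
Local Notation vR := (vR R v).
Local Notation ell j := (ell v lam j u).

Definition mcol (mm : 'I_n -> int) : 'cV[R]_n := \col_i (mm i)%:~R.

Lemma dot_vR mm j : vR j *m mcol mm = (dotZ mm (v j))%:~R%:M.
Proof.
apply/matrixP => i0 j0; rewrite !ord1 !mxE /dotZ rmorph_sum /=.
by apply: eq_bigr => i _; rewrite !mxE intrM mulrC.
Qed.

Lemma dot_all0 mm : \rank (spanR predT) = n ->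
  (forall j, dotZ mm (v j) = 0) -> forall i, mm i = 0.
Proof.
move=> full H.
have h0 : spanR predT *m mcol mm = 0.
  by apply: spanR_mul0 => j _; rewrite dot_vR H; apply/matrixP => i0 j0; rewrite !mxE; case: eqP => _; rewrite ?mulr0n ?mulr1n. 
have rf : row_free (spanR predT)^T by rewrite /row_free mxrank_tr full.
have : (mcol mm)^T *m (spanR predT)^T == 0 by rewrite -trmx_mul h0 trmx0.
rewrite mulmx_free_eq0 // => /eqP /matrixP Hm i.
by have := Hm 0 i; rewrite !mxE => /eqP; rewrite intr_eq0 => /eqP.
Qed.

End Dir12.

Section Dir12b.
Variables (R : realType) (n m : nat) (v : 'I_m -> 'I_n -> int) (lam : 'I_m -> R).
Variable (u : 'I_n -> R).
Local Notation spanR := (spanR R v).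
Local Notation vR := (vR R v).
Local Notation ell j := (ell v lam j u).
Hypothesis full : \rank (spanR predT) = n.

Lemma monoZ_neq0 (y : 'I_n -> R[i]) a : (forall k, y k != 0) -> monoZ y a != 0.
Proof. by move=> hy; apply/prodf_neq0 => k _; apply: expfz_neq0. Qed.

Lemma sbb_trop : strongly_bulk_balanced v lam u -> forall mm, in_trop v lam mm u.
Proof.
move=> [E [a [hE [ha [c [y [hc [hy heq]]]]]]]] mm.
case: (pickP (fun i => mm i != 0)) => [i0 hi0|H]; last first.
  by left => i; apply/eqP/negbNE; rewrite H.
right.
have [jw hjw] : exists j, dotZ mm (v j) != 0.
  apply/existsP; apply: contraLR hi0 => /existsPn H.
  by apply/negPn/eqP; apply: (dot_all0 full) => j; apply/eqP/negPn/H.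
case: (@arg_minP _ _ _ jw (fun j => dotZ mm (v j) != 0) (fun j => ell j) hjw) => j0 hj0 Hmin.
set t := ell j0.
case: (pickP (fun j => [&& j != j0, dotZ mm (v j) != 0 & ell j == t])) => [j1 /and3P [h1 h2 /eqP h3]|U].
  by exists j0, j1; split => //; rewrite eq_sym.
exfalso.
have uniq0 : forall j, dotZ mm (v j) != 0 -> ell j = t -> j = j0.
  move=> j hj ht; apply/eqP/negPn/negP => hne.
  by move: (U j); rewrite hne hj ht eqxx.
have lev : isLevel v lam u t by apply/existsP; exists j0.
pose mk k := \sum_(i < n) ((mm i)%:~R : rat) * E k i.
have ident : forall j, ((dotZ mm (v j))%:~R : rat) = \sum_(k < n) (a j k)%:~R * mk k.
  move=> j; rewrite /dotZ rmorph_sum /=.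
  have hv : forall i, ((v j i)%:~R : rat) = \sum_(k < n) (a j k)%:~R * E k i.
    move=> i; have := congr1 (fun M : 'rV[rat]_n => M 0 i) (coordsM ha j).
    rewrite !mxE => ->; apply: eq_bigr => k _; by rewrite mxE.
  under eq_bigr do rewrite intrM hv mulr_sumr.
  rewrite exchange_big /=; apply: eq_bigr => k _; rewrite /mk mulr_sumr.
  by apply: eq_bigr => i _; rewrite mulrCA.
have mk0 : forall k : 'I_n, (k < dimAprev v lam u t)%N -> mk k = 0.
  move=> k hk; have hs := rowE_prev hE lev hk.
  have H1 : forall j, (ell j < t)%R -> vR j *m @mcol R n mm = 0.
    move=> j hj; rewrite dot_vR; case: (eqVneq (dotZ mm (v j)) 0) => [->|hd].
      by apply/matrixP => ? ?; rewrite !mxE; case: eqP; rewrite ?mulr0n.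
    by have := Hmin j hd; rewrite /t => hle; move: hj; rewrite ltNge hle.
  have := @sub_mul0 R n m v _ 1 1 (@mcol R n mm) _ H1 hs.
  move=> /matrixP /(_ 0 0); rewrite !mxE => hz.
  apply/eqP; rewrite -(fmorph_eq0 (@ratr R)) rmorph_sum /=; apply/eqP.
  rewrite -[X in _ = X]hz; apply: eq_bigr => i _.
  by rewrite !mxE rmorphM /= ratr_int mulrC.

pose Phi := \sum_(j < m | ell j == t) c j * monoZ y (a j) * ((dotZ mm (v j))%:~R : R[i]).
have PhiA : Phi = c j0 * monoZ y (a j0) * (dotZ mm (v j0))%:~R.
  rewrite /Phi (bigD1 j0) ?eqxx //= big1 ?addr0 // => j /andP [ht hne].
  case: (eqVneq (dotZ mm (v j)) 0) => [->|hd]; first by rewrite mulr0.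
  by move: hne; rewrite (uniq0 j hd (eqP ht)) eqxx.
have PhiB : Phi = 0.
  rewrite /Phi.
  under eq_bigr => j _ do rewrite -ratr_int ident rmorph_sum mulr_sumr.
  rewrite exchange_big /= big1 // => k _.
  case: (ltnP k (dimAprev v lam u t)) => hkp.
    by rewrite big1 // => j _; rewrite mk0 // mulr0 rmorph0 mulr0.
  case: (ltnP k (dimA v lam u t)) => hkq.
    have := heq t lev k; rewrite hkp hkq => /(_ isT) H0.
    rewrite -[X in _ = X](mulr0 (ratr (mk k))) -[X in _ = _ * X]H0 mulr_sumr.
    apply: eq_bigr => j _; rewrite rmorphM /= ratr_int; ring.
  rewrite big1 // => j /eqP ht.
  by rewrite (coord_zero hE ha full lev _ hkq) ?ht // mul0r rmorph0 mulr0.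
move: PhiA; rewrite PhiB => /esym /eqP; rewrite !mulf_eq0 (negbTE (hc j0)) (negbTE (monoZ_neq0 (a j0) hy)) /=.
by rewrite intr_eq0 (negbTE hj0).
Qed.

End Dir12b.

Section AdaptedOf.
Variables (R : realType) (n m : nat) (v : 'I_m -> 'I_n -> int) (lam : 'I_m -> R).
Variable (u : 'I_n -> R).
Local Notation spanR := (spanR R v).
Local Notation vR := (vR R v).
Local Notation ell j := (ell v lam j u).

Lemma row_pid_mul d (E : 'M[rat]_n) (k : 'I_n) :
  row k (pid_mx d *m E) = if (k < d)%N then row k E else 0.
Proof.
apply/rowP => i; rewrite !mxE (bigD1 k) //= big1 ?addr0.
  rewrite mxE eqxx /=; case: (k < d)%N; by rewrite ?mul1r ?mul0r ?mxE.
by move=> k' hk'; rewrite mxE -[(_ == _ :> nat)]/(k == k') eq_sym (negbTE hk') mul0r.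
Qed.

Lemma adapted_of (E : 'M[rat]_n) : E \in unitmx ->
  (forall t, isLevel v lam u t -> forall k : 'I_n, (k < dimA v lam u t)%N ->
     (map_mx ratr (row k E) <= spanR (fun j => (ell j <= t)%R))%MS) ->
  adapted_basis v lam u E.
Proof.
move=> hU H t lev; split; last first.
  move=> b hb; rewrite (sum_rowE E b) => /eqP.
  rewrite mulmx_free_eq0 ?row_free_unit // => /eqP /rowP hb0 k.
  by have := hb0 k; rewrite !mxE.
move=> q; split.
  move=> hq; set d := dimA v lam u t.
  pose Fd : 'M[rat]_n := pid_mx d *m E.
  have hF : (map_mx ratr Fd <= spanR (fun j => (ell j <= t)%R))%MS.
    apply/row_subP => k; rewrite -map_row row_pid_mul; case: ifP => hk.
      exact: H.
    by rewrite map_mx0 sub0mx.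
  have rF : \rank (map_mx (@ratr R) Fd) = d.
    rewrite (mxrank_map (@ratr R)) /Fd mxrankMfree ?row_free_unit //.
    by rewrite rank_pid_mx // /d /dimA rank_leq_col.
  have := mxrank_leqif_sup hF; rewrite rF => -[_]; rewrite /d /dimA eqxx => /esym hS.
  have : (q <= Fd)%MS by rewrite -(map_submx (@ratr R)) (submx_trans hq hS).
  case/submxP => w ->; exists (fun k => (w *m pid_mx d) 0 k); split.
    move=> k hk; rewrite mxE big1 // => i _; rewrite mxE.
    case: eqP => [ei|]; last by rewrite mulr0.
    by rewrite ei /d /dimA ltnNge hk mulr0.
  rewrite (sum_rowE E) /Fd mulmxA; congr mulmx; apply/matrixP => i k; by rewrite (ord1 i) [in RHS]mxE.
move=> [b [hb ->]]; rewrite sum_rowE map_mxM mulmx_sum_row.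
apply: summx_sub => k _; rewrite mxE.
case: (ltnP k (dimA v lam u t)) => hk.
  by apply: scalemx_sub; rewrite -map_row; apply: H.
by rewrite [(\row_k0 _) 0 k]mxE hb // rmorph0 scale0r sub0mx.
Qed.

End AdaptedOf.

Lemma rank_addrow (F : fieldType) p n (A : 'M[F]_(p, n)) (w : 'rV[F]_n) :
  ~~ (w <= A)%MS -> \rank (A + w)%MS = (\rank A).+1.
Proof.
move=> hw; apply/eqP; rewrite eqn_leq; apply/andP; split.
  have [h _] := mxrank_adds_leqif A w.
  by apply: leq_trans h _; rewrite -[X in (_ <= X)%N]addn1 leq_add2l rank_leq_row.
have : (A < A + w)%MS.
  rewrite ltmxEneq addsmxSl /=; apply: contra hw => h.
  exact: submx_trans (addsmxSr A w) h.
by rewrite ltmxErank => /andP [_].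
Qed.

Section Construct.
Variables (R : realType) (n m : nat) (v : 'I_m -> 'I_n -> int) (lam : 'I_m -> R).
Variable (u : 'I_n -> R).
Local Notation spanR := (spanR R v).
Local Notation vR := (vR R v).
Local Notation ell j := (ell v lam j u).

Definition prec (i j : 'I_m) : bool := (ell i < ell j) || ((ell i == ell j) && (i < j)%N).

Lemma prec_irr i : ~~ prec i i.
Proof. by rewrite /prec ltxx eqxx ltnn. Qed.

Lemma prec_le i j : prec i j -> ell i <= ell j.
Proof. by case/orP => [/ltW //| /andP [/eqP -> _]]. Qed.

Lemma prec_trans i j k : prec i j -> prec j k -> prec i k.
Proof.
rewrite /prec => /orP [h1|/andP [/eqP e1 h1]] /orP [h2|/andP [/eqP e2 h2]].
- by rewrite (lt_trans h1 h2).
- by rewrite -e2 h1.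
- by rewrite e1 h2.
- by rewrite e1 e2 eqxx (ltn_trans h1 h2) orbT.
Qed.

Lemma prec_total i j : i != j -> prec i j || prec j i.
Proof.
move=> hij; rewrite /prec; case: (ltgtP (ell i) (ell j)) => //= e.
case: (ltngtP i j) => // e'.
by move: hij; rewrite (val_inj e') eqxx.
Qed.

Definition Bset : {set 'I_m} := [set j | ~~ (vR j <= spanR (fun i => prec i j))%MS].
Definition pos j := #|[set i | prec i j]|.

Lemma pos_lt i j : prec i j -> (pos i < pos j)%N.
Proof.
move=> hij; apply: proper_card; apply/properP; split.
  by apply/subsetP => k; rewrite !inE => h; apply: prec_trans h hij.
by exists i; rewrite !inE ?hij ?prec_irr.
Qed.

Lemma spanning j : (vR j <= spanR (fun i => (i \in Bset) && ((i == j) || prec i j)))%MS.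
Proof.
suff H : forall N j, (pos j < N)%N ->
  (vR j <= spanR (fun i => (i \in Bset) && ((i == j) || prec i j)))%MS by exact: H.
elim => [//|N IH] {}j hj.
case hB: (j \in Bset).
  by apply: sub_spanR; rewrite hB eqxx.
move: hB; rewrite inE => /negbFE h; apply: submx_trans h _.
apply: spanR_subP => i hij.
have := IH i (leq_trans (pos_lt hij) hj); move/submx_trans; apply.
apply: spanR_sub => k /andP [-> /orP [/eqP ->|hk]]; first by rewrite hij orbT.
by rewrite (prec_trans hk hij) orbT.
Qed.

Lemma down_span (T : pred 'I_m) : (forall i j, prec i j -> T j -> T i) ->
  (spanR T <= spanR (fun i => (i \in Bset) && T i))%MS.
Proof.
move=> hT; apply: spanR_subP => j Tj; apply: submx_trans (spanning j) _.
apply: spanR_sub => i /andP [-> /orP [/eqP -> //|hij]]; exact: hT hij Tj.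
Qed.

Lemma indep (T : {set 'I_m}) : T \subset Bset -> \rank (spanR (fun i => i \in T)) = #|T|.
Proof.
move: {2}#|T| (erefl #|T|) => N; elim: N T => [|N IH] T hN hTB.
  move/eqP: hN; rewrite cards_eq0 => /eqP ->.
  by rewrite (@spanR_ext R n m v _ pred0) ?spanR0 ?mxrank0 ?cards0 // => i; rewrite inE.
have [x0 hx0] : exists x, x \in T by apply/card_gt0P; rewrite hN.
case: (@arg_maxP _ _ _ x0 (fun i => i \in T) pos hx0) => x hx hmax.
set T' := T :\ x.
have hN' : #|T'| = N by move: hN; rewrite (cardsD1 x) hx add1n => -[].
have hT'B : T' \subset Bset by apply: subset_trans hTB; apply: subsetDl.
have hpx : forall i, i \in T' -> prec i x.
  move=> i; rewrite !inE => /andP [hix hiT].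
  case/orP: (prec_total hix) => // hxi.
  by have := hmax i hiT; rewrite /= leEnat leqNgt (pos_lt hxi).
pose ST := spanR (fun i => i \in T); pose ST' := spanR (fun i => i \in T').
have eqS : (ST == ST' + vR x)%MS.
  apply/andP; split.
    apply: spanR_subP => j hj; case: (eqVneq j x) => [->|hjx]; first exact: addsmxSr.
    by apply: submx_trans (addsmxSl _ _); apply: sub_spanR; rewrite !inE hjx.
  rewrite addsmx_sub; apply/andP; split; last exact: sub_spanR.
  by apply: spanR_sub => j; rewrite !inE => /andP [].
rewrite (eqmx_rank eqS) rank_addrow; first by rewrite IH // hN' hN.
apply/negP => h.
have : x \in Bset by apply: (subsetP hTB).
rewrite inE => /negP; apply; apply: submx_trans h _.
by apply: spanR_sub => i; apply: hpx.
Qed.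

Hypothesis full : \rank (spanR predT) = n.

Lemma card_down (T : pred 'I_m) : (forall i j, prec i j -> T j -> T i) ->
  #|[set i in Bset | T i]| = \rank (spanR T).
Proof.
move=> hT; rewrite -indep; last by apply/subsetP => i; rewrite inE => /andP [].
apply: eqmx_rank; apply/andP; split.
  by apply: spanR_sub => i; rewrite inE => /andP [].
apply: submx_trans (down_span hT) _; apply: spanR_sub => i hi; by rewrite inE.
Qed.

Lemma cardB : #|Bset| = n.
Proof.
rewrite -full -(card_down (T := predT)) //; apply: eq_card => i; by rewrite inE andbT.
Qed.

Lemma card_level t : #|[set i in Bset | (ell i <= t)%R]| = dimA v lam u t.
Proof. by apply: card_down => i j /prec_le h1 h2; apply: le_trans h1 h2. Qed.

Definition bpos j := #|[set i in Bset | prec i j]|.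

Lemma bpos_lt j : j \in Bset -> (bpos j < n)%N.
Proof.
move=> hj; rewrite -cardB; apply: proper_card; apply/properP; split.
  by apply/subsetP => i; rewrite inE => /andP [].
by exists j => //; rewrite inE (negbTE (prec_irr j)) andbF.
Qed.

Lemma bpos_inj i j : i \in Bset -> j \in Bset -> bpos i = bpos j -> i = j.
Proof.
move=> hi hj hb; apply/eqP/negPn/negP => hij.
have key : forall x y, x \in Bset -> prec x y -> (bpos x < bpos y)%N.
  move=> x y hx hxy; apply: proper_card; apply/properP; split.
    by apply/subsetP => k; rewrite !inE => /andP [-> h] /=; apply: prec_trans h hxy.
  exists x; first by rewrite inE hx hxy.
  by rewrite inE (negbTE (prec_irr x)) andbF.
case/orP: (prec_total hij) => h.
  by move: (key _ _ hi h); rewrite hb ltnn.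
by move: (key _ _ hj h); rewrite hb ltnn.
Qed.

Lemma bpos_surj (r : 'I_n) : exists j, (j \in Bset) && (bpos j == r).
Proof.
pose s := [seq bpos j | j <- enum Bset].
have us : uniq s.
  rewrite map_inj_in_uniq ?enum_uniq // => i j; rewrite !mem_enum; exact: bpos_inj.
have sub : {subset s <= iota 0 n}.
  by move=> x /mapP [j]; rewrite mem_enum => hj ->; rewrite mem_iota add0n bpos_lt.
have hsz : (size (iota 0 n) <= size s)%N by rewrite size_iota size_map -cardE cardB.
have [_ eqs] := uniq_min_size us sub hsz.
have : (val r \in s) by rewrite eqs mem_iota add0n ltn_ord.
case/mapP => j; rewrite mem_enum => hj er; exists j; by rewrite hj er eqxx.
Qed.

End Construct.

Section Construct2.
Variables (R : realType) (n m : nat) (v : 'I_m -> 'I_n -> int) (lam : 'I_m -> R).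
Variable (u : 'I_n -> R).
Local Notation spanR := (spanR R v).
Local Notation vR := (vR R v).
Local Notation ell j := (ell v lam j u).
Hypothesis full : \rank (spanR predT) = n.
Local Notation Bset := (Bset v lam u).
Local Notation bpos := (bpos v lam u).
Local Notation prec := (prec v lam u).

Lemma exists_adapted : exists E a, adapted_basis v lam u E /\ coords v E a.
Proof.
have /fin_all_exists [b hb] : forall r : 'I_n, exists j, (j \in Bset) && (bpos j == r).
  exact: bpos_surj full.
have hbB r : b r \in Bset by case/andP: (hb r).
have hbp r : bpos (b r) = r by case/andP: (hb r) => _ /eqP.
have b_level : forall t (r : 'I_n), (r < dimA v lam u t)%N -> (ell (b r) <= t)%R.
  move=> t r hr; rewrite leNgt; apply/negP => hlt.
  have : [set i in Bset | (ell i <= t)%R] \subset [set i in Bset | prec i (b r)].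
    apply/subsetP => i; rewrite !inE => /andP [-> hi] /=.
    by rewrite /prec (le_lt_trans hi hlt).
  move/subset_leq_card; rewrite (card_level v lam u t) -/(bpos (b r)) hbp.
  by rewrite leqNgt hr.
have bsurj : forall j (hj : j \in Bset), b (Ordinal (bpos_lt full hj)) = j.
  move=> j hj; apply: (bpos_inj (hbB _) hj); by rewrite hbp.
pose EZ : 'M[int]_n := \matrix_(r, i) v (b r) i.
pose E0 : 'M[rat]_n := map_mx intr EZ.
have rowE0 : forall r, map_mx (@ratr R) (row r E0) = vR (b r).
  by move=> r; apply/rowP => i; rewrite !mxE ratr_int.
have uE0 : E0 \in unitmx.
  rewrite -row_full_unit -(row_full_map (@ratr R)) /row_full.
  apply/eqP/anti_leq; rewrite rank_leq_col /=.
  have hr : \rank (spanR (fun i => i \in Bset)) = n by rewrite (@indep R n m v lam u) ?(@cardB R n m v lam u).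
  rewrite -[X in (X <= _)%N]hr; apply: mxrankS; apply: spanR_subP => j hj; rewrite -(bsurj j hj) -rowE0 map_row.
  exact: row_sub.
set d := \det EZ.
have d0 : (d%:~R : rat) != 0.
  by move: uE0; rewrite unitmxE /E0 (det_map_mx (intr : int -> rat)) unitfE.
exists ((d%:~R : rat)^-1 *: E0), (fun j k => \sum_(i < n) v j i * \adj EZ i k).
split.
  apply: adapted_of; first by rewrite unitmxZ // unitfE invr_eq0.
  move=> t lev k hk.
  have -> : row k ((d%:~R : rat)^-1 *: E0) = (d%:~R : rat)^-1 *: row k E0.
    by apply/rowP => i; rewrite !mxE.
  rewrite map_mxZ rowE0; apply: scalemx_sub.
  by apply: sub_spanR; apply: b_level.
move=> j; rewrite sum_rowE.
pose vz : 'rV[int]_n := \row_i v j i.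
have -> : (\row_k ((\sum_(i < n) v j i * \adj EZ i k)%:~R : rat)) = map_mx intr (vz *m \adj EZ).
  by apply/rowP => k; rewrite !mxE rmorph_sum [RHS]rmorph_sum; apply: eq_bigr => i _; rewrite !mxE.
rewrite -scalemxAr map_mxM map_mx_adj -mulmxA mul_adj_mx -/E0.
rewrite (det_map_mx (intr : int -> rat)) -/d mul_mx_scalar scalerA mulVf // scale1r.
by apply/rowP => i; rewrite !mxE.
Qed.

End Construct2.

Lemma prim_exists n (Z : ('I_n -> int) -> Prop) :
  (forall z (d : int), d != 0 -> Z (fun k => z k * d) -> Z z) ->
  forall z, Z z -> (exists k, z k != 0) -> exists z', [/\ Z z', (exists k, z' k != 0) & primitiveZ z'].
Proof.
move=> hZ.
suff H : forall N z, (\sum_(k < n) `|z k|%N < N)%N -> Z z -> (exists k, z k != 0) ->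
   exists z', [/\ Z z', (exists k, z' k != 0) & primitiveZ z'] by move=> z; exact: H.
elim => [//|N IH] z hN hz [k0 hk0].
case: (classic (primitiveZ z)) => hp; first by exists z; split => //; exists k0.
have [d hd] := not_all_ex_not _ _ hp.
have [hdiv hd1] := imply_to_and _ _ hd.
case: (posnP d) => [d0|dpos].
  by move: (hdiv k0); rewrite d0 dvd0z (negbTE hk0).
have dz : (d%:Z != 0) by rewrite lt0n in dpos.
pose z' := fun k => (z k %/ d)%Z.
have ez : forall k, z k = z' k * d by move=> k; rewrite /z' divzK.
have hz' : Z z'.
  apply: (hZ _ d%:Z dz).
  have -> : (fun k => z' k * d%:Z) = z by apply: functional_extensionality => k; rewrite -ez.
  exact: hz.
have hk0' : z' k0 != 0 by apply: contraNneq hk0; rewrite ez => ->; rewrite mul0r.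
apply: (IH z') => //; last by exists k0.
rewrite ltnS in hN; apply: leq_trans hN.
have d2 : (1 < d)%N by rewrite ltn_neqAle eq_sym; apply/andP; split => //; apply/eqP.
under [X in (_ <= X)%N]eq_bigr do rewrite ez abszM.
rewrite -big_distrl /= -[X in (X < _)%N]muln1 ltn_mul2l d2 andbT.
rewrite lt0n sum_nat_eq0; apply/negP => /forallP /(_ k0) /implyP /(_ isT).
by rewrite absz_eq0 (negbTE hk0').
Qed.

Lemma combine (F : numFieldType) (m : nat) (K : ('I_m -> F) -> Prop) :
  K (fun _ => 0) -> (forall x y s, K x -> K y -> K (fun i => x i + s * y i)) ->
  (forall j, exists r, K r /\ r j != 0) -> exists c, K c /\ forall j, c j != 0.
Proof.
move=> K0 KD Hr.
suff H : forall N, (N <= m)%N -> exists c, K c /\ forall j : 'I_m, (j < N)%N -> c j != 0.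
  by have [c [Kc hc]] := H m (leqnn m); exists c; split => // j; apply: hc.
elim => [_|N IH hN]; first by exists (fun _ => 0).
have [c [Kc hc]] := IH (ltnW hN).
have [r [Kr hr]] := Hr (Ordinal hN).
pose s := 1 + \sum_(i < m) `|c i / r i|.
have spos : 0 < s by rewrite ltr_pwDl ?ltr01 // sumr_ge0.
have key : forall i, (c i != 0) || (r i != 0) -> c i + s * r i != 0.
  move=> i /orP [hci|hri].
    case: (eqVneq (r i) 0) => [->|hri]; first by rewrite mulr0 addr0.
    move: hci => _.
    apply/eqP => h.
    have es : s = - (c i / r i).
      by apply: (mulIf hri); rewrite mulNr divfK //; apply/eqP; rewrite -addr_eq0 addrC h.
    have : `|c i / r i| < s.
      have h1 : `|c i / r i| <= \sum_(i < m) `|c i / r i|.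
        by rewrite (bigD1 i) //= lerDl sumr_ge0.
      by apply: le_lt_trans h1 _; rewrite /s -subr_gt0 addrK ltr01.
    have e2 : `|c i / r i| = s by rewrite -normrN -es gtr0_norm.
    by rewrite e2 ltxx.
  apply/eqP => h.
  have es : s = - (c i / r i).
    by apply: (mulIf hri); rewrite mulNr divfK //; apply/eqP; rewrite -addr_eq0 addrC h.
  have : `|c i / r i| < s.
    have h1 : `|c i / r i| <= \sum_(i < m) `|c i / r i|.
      by rewrite (bigD1 i) //= lerDl sumr_ge0.
    by apply: le_lt_trans h1 _; rewrite /s -subr_gt0 addrK ltr01.
  have e2 : `|c i / r i| = s by rewrite -normrN -es gtr0_norm.
    by rewrite e2 ltxx.
exists (fun i => c i + s * r i); split; first exact: KD.
move=> j hj; apply: key; rewrite ltnS leq_eqVlt in hj.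
case/orP: hj => [/eqP ej|hj]; last by rewrite hc.
have -> : j = Ordinal hN by apply: val_inj.
by rewrite hr orbT.
Qed.

Section Bal.
Variables (R : realType) (n m : nat) (v : 'I_m -> 'I_n -> int) (lam : 'I_m -> R).
Variable (u : 'I_n -> R).
Local Notation spanR := (spanR R v).
Local Notation vR := (vR R v).
Local Notation ell j := (ell v lam j u).
Hypothesis full : \rank (spanR predT) = n.

Lemma mul_mcol0 j mm : (vR j *m mcol R mm == 0) = (dotZ mm (v j) == 0).
Proof.
rewrite dot_vR; apply/idP/idP => [/eqP /matrixP /(_ 0 0)|/eqP ->].
  by rewrite !mxE eqxx mulr1n => /eqP; rewrite intr_eq0.
by apply/eqP/matrixP => i j'; rewrite !mxE; case: eqP; rewrite ?mulr0n.
Qed.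

Lemma rat_int_kernel (Jm : {set 'I_m}) : \rank (spanR (fun i => i \in Jm)) = n.-1 -> (0 < n)%N ->
  exists z : 'I_n -> int, (exists k, z k != 0) /\ forall i, i \in Jm -> dotZ z (v i) = 0.
Proof.
move=> rA npos.
pose Aq : 'M[rat]_(m, n) := \matrix_(i, k) (if i \in Jm then (v i k)%:~R else 0).
have mAq : map_mx (@ratr R) Aq = spanR (fun i => i \in Jm).
  apply/matrixP => i k; rewrite !mxE; case: (i \in Jm); by rewrite ?ratr_int ?rmorph0.
have rAq : \rank Aq = n.-1 by rewrite -(mxrank_map (@ratr R)) mAq.
have : kermx Aq^T != 0.
  rewrite -mxrank_eq0 mxrank_ker mxrank_tr rAq subn_eq0 -ltnNge.
  by rewrite prednK.
case/rowV0Pn => w /sub_kermxP hw wn0.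
have [k0 hk0] : exists k, w 0 k != 0.
  apply/existsP; apply: contraR wn0 => /existsPn H.
  by apply/eqP/rowP => k; rewrite mxE; apply/eqP/negPn/H.
pose z := fun k => numq (w 0 k) * \prod_(k' < n | k' != k) denq (w 0 k').
pose D : rat := \prod_(k < n) (denq (w 0 k))%:~R.
have D0 : D != 0 by apply/prodf_neq0 => k _; rewrite intr_eq0 denq_neq0.
have Hz : forall k, ((z k)%:~R : rat) = D * w 0 k.
  move=> k; rewrite /z /D intrM rmorph_prod [in RHS](bigD1 k) //=.
  have e : ((numq (w 0 k))%:~R : rat) = (denq (w 0 k))%:~R * w 0 k.
    by rewrite -[X in _ = _ * X](divq_num_den (w 0 k)) mulrC divfK // intr_eq0 denq_neq0.
  by rewrite e -!mulrA; congr (_ * _); rewrite mulrC.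
exists z; split.
  exists k0; rewrite -(intr_eq0 rat) Hz mulf_neq0 //.
move=> i hi; apply/eqP; rewrite -(intr_eq0 rat) /dotZ rmorph_sum /=.
have := congr1 (fun M : 'rV[rat]_m => M 0 i) hw; rewrite !mxE => h.
apply/eqP; rewrite -[RHS](mulr0 D) -[in RHS]h mulr_sumr; apply: eq_bigr => k _.
by rewrite intrM Hz !mxE hi mulrA.
Qed.

Hypothesis H3 : forall mm : 'I_n -> int, primitiveZ mm ->
  (exists J : pred 'I_m, \rank (spanR J) = n.-1 /\ forall j, J j -> dotZ mm (v j) = 0) ->
  in_trop v lam mm u.

Definition spanS (J : {set 'I_m}) := spanR (fun i => i \in J).

Definition Sb j := fun i => (ell i < ell j) || ((ell i == ell j) && (i != j)).

Lemma balanced j : (vR j <= spanR (Sb j))%MS.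
Proof.
apply/negPn/negP => hn.
pose P (J : {set 'I_m}) := [forall i, Sb j i ==> (i \in J)] &&
   ~~ (vR j <= spanS J)%MS.
have P0 : P [set i | Sb j i].
  rewrite /P; apply/andP; split; first by apply/forallP => i; apply/implyP; rewrite inE.
  by rewrite /spanS (@spanR_ext R n m v _ (Sb j)) // => i; rewrite inE.
case: (@arg_maxP _ _ _ _ P (fun J => #|J|) P0) => Jm hPm hmax.
move: hPm => /andP [/forallP hSJ hnJ].
pose A := spanR (fun i => i \in Jm).
have hjJ : j \notin Jm by apply: contra hnJ => hj; apply: sub_spanR.
have hiJ : forall i, i \notin Jm -> (vR j <= A + vR i)%MS.
  move=> i hi.
  have hc : ~~ P (i |: Jm).
    apply/negP => hP; have := hmax _ hP; rewrite /= leEnat cardsU1 hi add1n ltnn.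
    by [].
  move: hc; rewrite /P negb_and negbK => /orP [/forallPn [x]|h].
    by rewrite negb_imply => /andP [hx]; rewrite !inE (implyP (hSJ x) hx) orbT.
  apply: submx_trans h _; apply: spanR_subP => x; rewrite !inE => /orP [/eqP ->|hx].
    exact: addsmxSr.
  by apply: submx_trans (addsmxSl _ _); apply: sub_spanR.
have rAj : \rank (A + vR j)%MS = (\rank A).+1 by rewrite rank_addrow.
have hall : forall i, (vR i <= A + vR j)%MS.
  move=> i; case: (boolP (i \in Jm)) => hi.
    by apply: submx_trans (addsmxSl _ _); apply: sub_spanR.
  have sub1 : (A + vR j <= A + vR i)%MS by rewrite addsmx_sub addsmxSl hiJ.
  have [_] := mxrank_leqif_sup sub1.
  have rle : (\rank (A + vR i)%MS <= \rank (A + vR j)%MS)%N.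
    have [h _] := mxrank_adds_leqif A (vR i).
    by apply: leq_trans h _; rewrite rAj -[X in (_ <= X)%N]addn1 leq_add2l rank_leq_row.
  have -> : \rank (A + vR j)%MS == \rank (A + vR i)%MS.
    by rewrite eqn_leq rle mxrankS.
  move/esym => h2; apply: submx_trans (addsmxSr A (vR i)) _; by rewrite h2.
have rA : \rank A = n.-1.
  have h1 : (n <= (\rank A).+1)%N.
    by rewrite -[X in (X <= _)%N]full -rAj; apply: mxrankS; apply: spanR_subP => i _; apply: hall.
  have h2 : ((\rank A).+1 <= n)%N by rewrite -rAj rank_leq_col.
  have e : (\rank A).+1 = n by apply/eqP; rewrite eqn_leq h2 h1.
  by rewrite -[X in _ = X.-1]e.
have npos : (0 < n)%N by apply: leq_trans (rank_leq_col (A + vR j)%MS); rewrite rAj.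
have [z [[k0 hk0] hz]] := rat_int_kernel rA npos.
pose Z := fun z : 'I_n -> int => forall i, i \in Jm -> dotZ z (v i) = 0.
have hZ : forall z (d : int), d != 0 -> Z (fun k => z k * d) -> Z z.
  move=> z1 d hd hz1 i hi; have := hz1 i hi.
  rewrite /dotZ; under eq_bigr do rewrite mulrAC.
  rewrite -mulr_suml => /eqP; rewrite mulf_eq0 (negbTE hd) orbF => /eqP.
  by [].
have [z' [hZ' [k1 hk1] hprim]] := prim_exists hZ hz (ex_intro _ k0 hk0).
have := H3 hprim (ex_intro _ (fun i => i \in Jm) (conj rA hZ')).
case => [hz0|[j1 [j2 [h12 hd1 hd2 he hmin]]]].
  by move: hk1; rewrite hz0 eqxx.
have hdj : dotZ z' (v j) != 0.
  apply/negP => /eqP hd0.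
  have hK : (A + vR j <= kermx (mcol R z'))%MS.
    rewrite addsmx_sub; apply/andP; split.
      apply/sub_kermxP; apply: spanR_mul0 => i hi; apply/eqP; by rewrite mul_mcol0 hZ'.
    by apply/sub_kermxP/eqP; rewrite mul_mcol0 hd0.
  have : forall i, dotZ z' (v i) = 0.
    move=> i; apply/eqP; rewrite -mul_mcol0; apply/eqP/sub_kermxP.
    exact: submx_trans (hall i) hK.
  move/(dot_all0 full) => hz0; by move: hk1; rewrite hz0 eqxx.
have nS : forall x, dotZ z' (v x) != 0 -> ~~ Sb j x.
  move=> x hx; apply: contra hx => hS; apply/eqP; apply: hZ'; exact: (implyP (hSJ x) hS).
have l1 : ell j1 <= ell j := hmin j hdj.
have ej : forall x, dotZ z' (v x) != 0 -> ell x <= ell j -> x = j.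
  move=> x hx hle; have := nS x hx; rewrite /Sb negb_or negb_and negbK => /andP [hlt].
  move: hle; rewrite le_eqVlt (negbTE hlt) orbF => -> /=; by move/eqP.
have e1 := ej j1 hd1 l1.
have l2 : ell j2 <= ell j by rewrite -he.
have e2 := ej j2 hd2 l2.
by move: h12; rewrite e1 e2 eqxx.
Qed.

End Bal.

Section Rel.
Variables (R : realType) (n m : nat) (v : 'I_m -> 'I_n -> int) (lam : 'I_m -> R).
Variable (u : 'I_n -> R).
Local Notation spanR := (spanR R v).
Local Notation vR := (vR R v).
Local Notation ell j := (ell v lam j u).
Hypothesis full : \rank (spanR predT) = n.
Variables (E : 'M[rat]_n) (a : 'I_m -> 'I_n -> int).
Hypothesis (hE : adapted_basis v lam u E) (ha : coords v E a).

Definition Krel (r : 'I_m -> R) := forall t, isLevel v lam u t -> forall k : 'I_n,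
  (dimAprev v lam u t <= k < dimA v lam u t)%N ->
  \sum_(i < m | ell i == t) r i * (a i k)%:~R = 0.

Lemma relations (bal : forall j, (vR j <= spanR (Sb v lam u j))%MS) :
  forall j, exists r, Krel r /\ r j != 0.
Proof.
move=> j.
have [D hD] := spanR_sub_row (bal j).
pose ER := map_mx (@ratr R) E.
have uER : ER \in unitmx by rewrite map_unitmx (unitEad hE full).
have hvj : forall x, vR x = (\row_k ((a x k)%:~R : R)) *m ER.
  move=> x; rewrite -vR_ratr (coordsM ha) map_mxM; congr (_ *m _).
  by apply/rowP => k; rewrite !mxE rmorph_int.
have ident : forall k, ((a j k)%:~R : R) = \sum_(i < m | Sb v lam u j i) D i * (a i k)%:~R.
  have : (\row_k ((a j k)%:~R : R)) = \sum_(i < m | Sb v lam u j i) D i *: (\row_k ((a i k)%:~R : R)).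
    have rf : row_free ER by rewrite row_free_unit.
    apply: (row_free_inj rf).
    by rewrite -hvj hD mulmx_suml; apply: eq_bigr => i _; rewrite hvj scalemxAl.
  move/rowP => h k; have := h k; rewrite mxE summxE => ->.
  by apply: eq_bigr => i _; rewrite !mxE.
pose r := fun i => if i == j then 1 else if ell i == ell j then - D i else 0.
exists r; split; last by rewrite /r eqxx oner_neq0.
move=> t lev k /andP [hk1 hk2].
case: (eqVneq (ell j) t) => [et|net]; last first.
  apply: big1 => i /eqP ei; rewrite /r.
  case: (eqVneq i j) => [eij|nij]; first by move: net; rewrite -eij ei eqxx.
  by rewrite ei eq_sym (negbTE net) mul0r.
rewrite (bigD1 j) ?et //= /r eqxx mul1r ident.
rewrite (bigID (fun i => ell i < ell j)) /= big1 ?add0r; last first.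
  move=> i /andP [_ hi]; rewrite (coord_zero_prev hE ha full lev _ hk1) ?mulr0 //.
  by rewrite -et.
rewrite -[RHS](subrr (\sum_(i < m | Sb v lam u j i && ~~ (ell i < ell j)) D i * (a i k)%:~R)).
congr (_ + _); rewrite -sumrN; apply: eq_big => i.
  rewrite /Sb -et; case: (eqVneq i j) => [->|nij]; first by rewrite ltxx eqxx.
  rewrite andbT; case: ltgtP => //=.
move=> /andP [hi nij]; rewrite (negbTE nij) (eqP hi) ?et eqxx mulNr.
by [].
Qed.

End Rel.

Unset Implicit Arguments.
Set Strict Implicit.

Lemma dir31 (R : realType) (n m : nat) (v : 'I_m -> 'I_n -> int) (lam : 'I_m -> R)
  (u : 'I_n -> R) (full : \rank (spanR R v predT) = n) :
  (forall mm : 'I_n -> int, primitiveZ mm ->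
    (exists J : pred 'I_m, \rank (spanR R v J) = n.-1 /\ forall j, J j -> dotZ mm (v j) = 0) ->
    in_trop v lam mm u) -> strongly_bulk_balanced v lam u.
Proof.
move=> H3.
have [E [a [hE ha]]] := exists_adapted lam u full.
have bal := balanced full H3.
have Hr := relations full hE ha bal.
have K0 : Krel v lam u a (fun _ => 0).
  by move=> t lev k hk; apply: big1 => i _; rewrite mul0r.
have KD : forall x y s, Krel v lam u a x -> Krel v lam u a y ->
    Krel v lam u a (fun i => x i + s * y i).
  move=> x y s hx hy t lev k hk.
  under eq_bigr do rewrite mulrDl -mulrA.
  by rewrite big_split /= -mulr_sumr hx // hy // mulr0 addr0.
have [c [Kc hc]] := combine K0 KD Hr.
exists E, a; split => //; split => //.
exists (fun j => real_complex R (c j)), (fun _ => 1); split.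
  by move=> j; rewrite fmorph_eq0.
split; first by move=> k; apply: oner_neq0.
move=> t lev k hk.
have -> : \sum_(j < m | ell v lam j u == t) real_complex R (c j) * (a j k)%:~R * monoZ (fun _ => 1) (a j)
   = real_complex R (\sum_(j < m | ell v lam j u == t) c j * (a j k)%:~R).
  rewrite rmorph_sum; apply: eq_bigr => j _.
  rewrite /monoZ big1 ?mulr1; last by move=> i _; rewrite exp1rz.
  by rewrite rmorphM /= rmorph_int.
by rewrite Kc // rmorph0.
Qed.

Theorem theoremA (R : realType) (n m : nat) (v : 'I_m -> 'I_n -> int) (lam : 'I_m -> R)
    (hP : toric_polytope v lam) (u : 'I_n -> R) (hu : inIntP v lam u) :
  [<-> strongly_bulk_balanced v lam u;
       forall mm : 'I_n -> int, in_trop v lam mm u;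
       forall mm : 'I_n -> int, primitiveZ mm ->
         (exists J : pred 'I_m, \rank (spanR R v J) = n.-1 /\
            forall j, J j -> dotZ mm (v j) = 0) ->
         in_trop v lam mm u].
Proof.
case: hP => _ _ hB _.
have full := full_rank hB hu.
tfae.
- exact: sbb_trop full.
- by move=> h mm _ _; apply: h.
- exact: dir31 full.
Qed.
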